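(* Let $\rho\ge3$ be an integer and $(\rho_0,\rho_1,\rho_2)$ integers with $2\le\rho_0\le\rho_1\le\rho_2<\rho$ and $\rho_0+\rho_1+\rho_2=2\rho$. For every vector $\alpha=(\alpha_\ell)_{\ell=1}^{2\rho}$ over any extension field $\Phi$ of $F$, the following are equivalent: (i) $\det(M_\rho(\alpha))\neq0$; (ii) $\det(S_\rho(\alpha))\neq0$ and, for each $m\in\{0,1,2\}$, the entries $\alpha_\ell$, $\ell\in\Upsilon_m$, are pairwise distinct.
   Context: $\Upsilon_0=\{1,\dots,\rho_0\}$, $\Upsilon_1=\{\rho_0+1,\dots,\rho_0+\rho_1\}$, $\Upsilon_2=\{\rho_0+\rho_1+1,\dots,2\rho\}$. For $x=(x_\ell)_{\ell=1}^{2\rho}$ and $m\in\{0,1,2\}$, let $V_m(x)$ be the $\rho\times\rho_m$ matrix $(x_\ell^i)_{i=0,\dots,\rho-1;\ \ell\in\Upsilon_m}$. $M_\rho(x)$ is the $2\rho\times2\rho$ matrix $\begin{pmatrix}-V_0(x)&V_1(x)&0\\-V_0(x)&0&V_2(x)\end{pmatrix}$. For $m\in\{0,1,2\}$ let $\sigma_m(z)=\prod_{\ell\in\Upsilon_m}(z-x_\ell)=\sum_{j=0}^{\rho_m}\sigma_{m,j}z^{\rho_m-j}$, and let $E_\rho^{(m)}(x)$ be the $(\rho-\rho_m)\times\rho$ matrix whose $(i,c)$ entry ($i=1,\dots,\rho-\rho_m$, $c=1,\dots,\rho$) equals $\sigma_{m,c-i}$ if $0\le c-i\le\rho_m$ and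 $0$ otherwise. $S_\rho(x)$ is the $\rho\times\rho$ matrix obtained by stacking $E_\rho^{(0)}(x)$, $E_\rho^{(1)}(x)$, $E_\rho^{(2)}(x)$ (in that order) vertically. $M_\rho(\alpha)$, $S_\rho(\alpha)$ denote substitution $x\leftarrow\alpha$. *)

(* Defs.v *)
(* Indices are 0-based: the paper's index l in {1..2rho}
   corresponds to l-1 : 'I_(2*rho); matrix rows/columns likewise. *)
From HB Require Import structures.
From mathcomp Require Import all_boot all_order all_algebra.
Set Implicit Arguments. Unset Strict Implicit. Unset Printing Implicit Defensive.
Import GRing.Theory.
Local Open Scope ring_scope.

(* block index m of the (0-based) position l: l in Upsilon_m *)
Definition ups (r0 r1 : nat) (l : nat) : nat :=
  if (l < r0)%N then 0%N else if (l < r0 + r1)%N then 1%N else 2%N.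

Definition rhom (r0 r1 r2 : nat) (m : nat) : nat :=
  match m with 0 => r0 | 1 => r1 | _ => r2 end.

Section Defs.
Variable (Phi : fieldType) (rho r0 r1 r2 : nat).

(* M_rho(x) = [ -V0 V1 0 ; -V0 0 V2 ], with V_m entries x_l^i, i = row mod rho *)
Definition Mmat (x : 'I_(2 * rho) -> Phi) : 'M[Phi]_(2 * rho) :=
  \matrix_(r < 2 * rho, l < 2 * rho)
    let i := (if (r < rho)%N then val r else (val r - rho)%N) in
    match ups r0 r1 l with
    | 0%N => - x l ^+ i
    | 1%N => if (r < rho)%N then x l ^+ i else 0
    | _ => if (r < rho)%N then 0 else x l ^+ i
    end.

Definition sigma_poly (x : 'I_(2 * rho) -> Phi) (m : nat) : {poly Phi} :=
  \prod_(l < 2 * rho | ups r0 r1 l == m) ('X - (x l)%:P).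

Definition sigma_coef (x : 'I_(2 * rho) -> Phi) (m j : nat) : Phi :=
  (sigma_poly x m)`_(rhom r0 r1 r2 m - j).

Definition E_entry (x : 'I_(2 * rho) -> Phi) (m i c : nat) : Phi :=
  if (i <= c)%N && (c - i <= rhom r0 r1 r2 m)%N then sigma_coef x m (c - i) else 0.

Definition Emat (x : 'I_(2 * rho) -> Phi) (m : nat) :
  'M[Phi]_(rho - rhom r0 r1 r2 m, rho) :=
  \matrix_(i < rho - rhom r0 r1 r2 m, c < rho) E_entry x m i c.

(* S_rho(x): vertical stacking of E^(0) (rho - r0 rows), E^(1) (rho - r1 rows),
   E^(2) (remaining rows). *)
Definition Smat (x : 'I_(2 * rho) -> Phi) : 'M[Phi]_rho :=
  \matrix_(i < rho, c < rho)
    if (i < rho - r0)%N then E_entry x 0 i c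
    else if (i < (rho - r0) + (rho - r1))%N then E_entry x 1 (i - (rho - r0)) c
    else E_entry x 2 (i - ((rho - r0) + (rho - r1))) c.

End Defs.

(* Main.v *)
Require Import Defs.
From HB Require Import structures.
From mathcomp Require Import all_boot all_order all_algebra.
From mathcomp Require Import zify.
Import GRing.Theory.
Local Open Scope ring_scope.


Set Implicit Arguments. Unset Strict Implicit.

Lemma ups_le2 r0 r1 l : (ups r0 r1 l <= 2)%N.
Proof. by rewrite /ups; case: ifP => //; case: ifP. Qed.

Lemma sum3 (R : nmodType) n (g : 'I_n -> nat) (f : 'I_n -> R) :
  (forall l, g l <= 2)%N ->
  \sum_l f l = \sum_(l | g l == 0%N) f l + \sum_(l | g l == 1%N) f l
             + \sum_(l | g l == 2%N) f l.
Proof.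
move=> hg; rewrite !(big_mkcond (fun l => g l == _)) -!big_split /=.
apply: eq_bigr => l _; have := hg l.
by case: (g l) => [|[|[|]]] //= _; rewrite ?addr0 ?add0r.
Qed.

Lemma card_ups r0 r1 r2 rho m : (r0 + r1 + r2 = 2 * rho)%N -> (m <= 2)%N ->
  #|[pred l : 'I_(2 * rho) | ups r0 r1 l == m]| = rhom r0 r1 r2 m.
Proof.
move=> hs hm; rewrite -sum1_card.
rewrite (eq_bigl (fun l : 'I_(2 * rho) => ups r0 r1 l == m)) //.
rewrite -(big_mkord (fun l => ups r0 r1 l == m) (fun=> 1%N)).
rewrite (big_cat_nat _ (n := r0)) //= ?leq0n //; last lia.
rewrite (big_cat_nat _ (m := r0) (n := (r0 + r1)%N)) //=; [|lia|lia].
have e0 : forall i, (0 <= i < r0)%N -> ups r0 r1 i = 0%N.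
  by move=> i /andP[_ h]; rewrite /ups h.
have e1 : forall i, (r0 <= i < r0 + r1)%N -> ups r0 r1 i = 1%N.
  by move=> i /andP[h1 h]; rewrite /ups h ltnNge h1.
have e2 : forall i, (r0 + r1 <= i < 2 * rho)%N -> ups r0 r1 i = 2%N.
  move=> i /andP[h1 h]; rewrite /ups ltnNge (leq_trans _ h1) ?leq_addr //.
  by rewrite ltnNge h1.
have gen : forall a b k, (forall i, (a <= i < b)%N -> ups r0 r1 i = k) ->
   (\sum_(a <= i < b | ups r0 r1 i == m) 1 = if m == k then b - a else 0)%N.
  move=> a b k ek; rewrite big_nat_cond.
  rewrite (eq_bigl (fun i => (a <= i < b)%N && (m == k))); last first.
    by move=> i /=; case h: (a <= i < b)%N => //=; rewrite ek // eq_sym.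
  case: (m == k); last by rewrite big_pred0 // => i; rewrite andbF.
  by rewrite -big_nat_cond sum_nat_const_nat muln1.
rewrite (gen _ _ _ e0) (gen _ _ _ e1) (gen _ _ _ e2).
move: gen => _; case: m hm => [|[|[|]]] //= _; lia.
Qed.

Lemma size_sigma (Phi : fieldType) rho r0 r1 r2 (x : 'I_(2 * rho) -> Phi) m :
  (r0 + r1 + r2 = 2 * rho)%N -> (m <= 2)%N ->
  size (sigma_poly r0 r1 x m) = (rhom r0 r1 r2 m).+1.
Proof.
move=> hs hm; rewrite /sigma_poly -big_filter size_prod_XsubC size_filter.
by rewrite -(card_ups hs hm) cardE /enum_mem size_filter.
Qed.

Lemma sigma_root (Phi : fieldType) rho r0 r1 (x : 'I_(2 * rho) -> Phi) (l : 'I_(2 * rho)) :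
  (sigma_poly r0 r1 x (ups r0 r1 l)).[x l] = 0.
Proof.
rewrite /sigma_poly horner_prod (bigD1 l) //= !hornerE subrr mul0r //.
Qed.

Lemma sigma_monic (Phi : fieldType) rho r0 r1 (x : 'I_(2 * rho) -> Phi) m :
  sigma_poly r0 r1 x m \is monic.
Proof. exact: monic_prod_XsubC. Qed.

Lemma E_entryE (Phi : fieldType) rho r0 r1 r2 (x : 'I_(2 * rho) -> Phi) m o c :
  (r0 + r1 + r2 = 2 * rho)%N -> (m <= 2)%N -> (rhom r0 r1 r2 m < rho)%N ->
  (o < rho - rhom r0 r1 r2 m)%N -> (c < rho)%N ->
  E_entry r0 r1 r2 x m o c =
  ('X^(rho - rhom r0 r1 r2 m - 1 - o) * sigma_poly r0 r1 x m)`_(rho - c.+1).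
Proof.
move=> hs hm hr ho hc; rewrite coefXnM /E_entry /sigma_coef.
have hsz := size_sigma x hs hm.
set rm := rhom r0 r1 r2 m in hr ho hsz *.
case: ltnP => h1.
  by rewrite ifF //; apply/negbTE; rewrite negb_and; apply/orP; right; rewrite -ltnNge; lia.
case: (leqP o c) => h2 /=.
  rewrite ifT; last lia.
  congr (_ `_ _); lia.
rewrite nth_default // hsz; lia.
Qed.

Definition blk (rho r0 r1 i : nat) : nat :=
  if (i < rho - r0)%N then 0%N else if (i < (rho - r0) + (rho - r1))%N then 1%N else 2%N.
Definition st (rho r0 r1 m : nat) : nat :=
  match m with 0 => 0%N | 1 => (rho - r0)%N | _ => ((rho - r0) + (rho - r1))%N end.
Definition kk (rho r0 r1 r2 i : nat) : nat :=
  (rho - rhom r0 r1 r2 (blk rho r0 r1 i) - 1 - (i - st rho r0 r1 (blk rho r0 r1 i)))%N.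

Lemma blk_le2 rho r0 r1 i : (blk rho r0 r1 i <= 2)%N.
Proof. by rewrite /blk; case: ifP => //; case: ifP. Qed.

Lemma blk_range rho r0 r1 r2 i :
  (r0 + r1 + r2 = 2 * rho)%N -> (r0 < rho)%N -> (r1 < rho)%N -> (r2 < rho)%N ->
  (i < rho)%N ->
  (st rho r0 r1 (blk rho r0 r1 i) <= i)%N /\
  (i < st rho r0 r1 (blk rho r0 r1 i) + (rho - rhom r0 r1 r2 (blk rho r0 r1 i)))%N.
Proof.
move=> hs h0 h1 h2 hi; rewrite /blk; case: ifP => /= a; first lia.
case: ifP => /= b; lia.
Qed.

Lemma rhom_lt rho r0 r1 r2 m : (r0 < rho)%N -> (r1 < rho)%N -> (r2 < rho)%N ->
  (rhom r0 r1 r2 m < rho)%N.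
Proof. by case: m => [|[|]]. Qed.

Lemma Smat_entry (Phi : fieldType) rho r0 r1 r2 (x : 'I_(2 * rho) -> Phi)
  (i c : 'I_rho) :
  (r0 + r1 + r2 = 2 * rho)%N -> (r0 < rho)%N -> (r1 < rho)%N -> (r2 < rho)%N ->
  Smat r0 r1 r2 x i c =
  ('X^(kk rho r0 r1 r2 i) * sigma_poly r0 r1 x (blk rho r0 r1 i))`_(rho - c.+1).
Proof.
move=> hs h0 h1 h2.
have [ha hb] := blk_range hs h0 h1 h2 (ltn_ord i).
rewrite mxE /kk; rewrite -E_entryE //; last first.
- lia.
- exact: rhom_lt.
- exact: blk_le2.
move: ha hb; rewrite /blk /=.
case: ifP => //= a; first by rewrite subn0.
by case: ifP.
Qed.

Lemma sum2 (R : nmodType) n (F : nat -> R) :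
  \sum_(r < 2 * n) F r = \sum_(r < n) F r + \sum_(r < n) F (n + r)%N.
Proof.
rewrite -!(big_mkord xpredT) (big_cat_nat _ (n:=n)) //=; last lia.
congr (_ + _); rewrite -{1}(add0n n) big_addn.
have -> : (2 * n - n = n)%N by lia.
rewrite big_mkord; by apply: eq_bigr => i _; rewrite addnC.
Qed.

Lemma poly_eq0_small (R : nzRingType) (p : {poly R}) n :
  (size p <= n)%N -> (forall i, (i < n)%N -> p`_i = 0) -> p = 0.
Proof.
move=> hs hi; apply/polyP => i; rewrite coef0.
case: (ltnP i n) => h; first exact: hi.
by apply: nth_default; apply: leq_trans h.
Qed.

Lemma dirB (Phi : fieldType) rho r0 r1 r2 (x : 'I_(2 * rho) -> Phi) :
  (r0 + r1 + r2 = 2 * rho)%N -> (r0 < rho)%N -> (r1 < rho)%N -> (r2 < rho)%N ->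
  \det (Smat r0 r1 r2 x) == 0 -> \det (Mmat r0 r1 x) == 0.
Proof.
move=> hs h0 h1 h2 /det0P [w wn0 wS].
set sig := sigma_poly r0 r1 x.
pose Q m := \sum_(i < rho | blk rho r0 r1 i == m) w 0 i *: 'X^(kk rho r0 r1 r2 i).
have szQ : forall m, (m <= 2)%N -> (size (Q m) <= rho - rhom r0 r1 r2 m)%N.
  move=> m hm; rewrite /Q; apply: (big_ind (fun p : {poly Phi} => size p <= rho - rhom r0 r1 r2 m)%N) => //=.
  - by rewrite size_poly0.
  - by move=> p q hp hq; rewrite (leq_trans (size_polyD _ _)) // geq_max hp hq.
  move=> i /eqP hi; rewrite (leq_trans (size_scale_leq _ _)) // size_polyXn.
  have := blk_range hs h0 h1 h2 (ltn_ord i); rewrite /kk hi; lia.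
have szsig : forall m, (m <= 2)%N -> size (sig m) = (rhom r0 r1 r2 m).+1.
  by move=> m hm; apply: size_sigma.
have hT : Q 0%N * sig 0%N + Q 1%N * sig 1%N + Q 2%N * sig 2%N = 0.
  have -> : Q 0%N * sig 0%N + Q 1%N * sig 1%N + Q 2%N * sig 2%N =
     \sum_(i < rho) w 0 i *: ('X^(kk rho r0 r1 r2 i) * sig (blk rho r0 r1 i)).
    rewrite (@sum3 _ _ (fun i : 'I_rho => blk rho r0 r1 i)); last by move=> i; exact: blk_le2.
    rewrite /Q !mulr_suml.
    by congr (_ + _ + _); apply: eq_bigr => i /eqP ->; rewrite scalerAl.
  apply: (@poly_eq0_small _ _ rho).
    apply: (big_ind (fun p : {poly Phi} => size p <= rho)%N) => //=.
    - by rewrite size_poly0.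
    - by move=> p q hp hq; rewrite (leq_trans (size_polyD _ _)) // geq_max hp hq.
    move=> i _; rewrite (leq_trans (size_scale_leq _ _)) //.
    rewrite (leq_trans (size_polyMleq _ _)) // size_polyXn szsig ?blk_le2 //.
    have := blk_range hs h0 h1 h2 (ltn_ord i); rewrite /kk.
    have := rhom_lt (blk rho r0 r1 i) h0 h1 h2; lia.
  move=> n hn; have hc : (rho - n.+1 < rho)%N by lia.
  have h := congr1 (fun M : 'M[Phi]_(1, rho) => M 0 (Ordinal hc)) wS.
  rewrite !mxE in h; rewrite coef_sum -[RHS]h; apply: eq_bigr => i _.
  rewrite coefZ Smat_entry //=.
  congr (_ * (_ `_ _)); lia.
set U := Q 1%N * sig 1%N in hT; set U' := Q 2%N * sig 2%N in hT.
have szU : (size U <= rho)%N.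
  rewrite (leq_trans (size_polyMleq _ _)) // szsig //.
  have := szQ 1%N isT; have := rhom_lt 1 h0 h1 h2; simpl; lia.
have szU' : (size U' <= rho)%N.
  rewrite (leq_trans (size_polyMleq _ _)) // szsig //.
  have := szQ 2%N isT; have := rhom_lt 2 h0 h1 h2; simpl; lia.
have hor : forall (p : {poly Phi}) a, (size p <= rho)%N ->
    \sum_(r < rho) p`_r * a ^+ r = p.[a].
  by move=> p a hp; rewrite (horner_coef_wide _ hp).
apply/det0P; exists (\row_(r < 2 * rho) (if (r < rho)%N then U`_r else U'`_(r - rho))).
  apply/negP => /eqP v0.
  have hU : U = 0.
    apply: (poly_eq0_small szU) => i hi; have hi2 : (i < 2 * rho)%N by lia.
    have := congr1 (fun M : 'M[Phi]_(1, 2 * rho) => M 0 (Ordinal hi2)) v0.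
    by rewrite !mxE /= hi.
  have hU' : U' = 0.
    apply: (poly_eq0_small szU') => i hi; have hi2 : (rho + i < 2 * rho)%N by lia.
    have := congr1 (fun M : 'M[Phi]_(1, 2 * rho) => M 0 (Ordinal hi2)) v0.
    by rewrite !mxE /= ltnNge leq_addr /= addKn.
  have sn0 : forall m, sig m != 0 by move=> m; apply: monic_neq0; apply: sigma_monic.
  have hQ1 : Q 1%N = 0 by move: hU => /eqP; rewrite mulf_eq0 (negbTE (sn0 _)) orbF => /eqP.
  have hQ2 : Q 2%N = 0 by move: hU' => /eqP; rewrite mulf_eq0 (negbTE (sn0 _)) orbF => /eqP.
  have hQ0 : Q 0%N = 0.
    by move: hT; rewrite hU hU' !addr0 => /eqP; rewrite mulf_eq0 (negbTE (sn0 _)) orbF => /eqP.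
  have hQ : forall m, (m <= 2)%N -> Q m = 0 by case=> [|[|[|]]].
  apply/(negP wn0)/eqP/rowP => i; rewrite mxE.
  have <- : (Q (blk rho r0 r1 i))`_(kk rho r0 r1 r2 i) = w 0 i.
    rewrite /Q coef_sum (bigD1 i) //= coefZ coefXn eqxx mulr1 big1 ?addr0 //.
    move=> j /andP[/eqP hj ji]; rewrite coefZ coefXn.
    case hk: (kk rho r0 r1 r2 i == kk rho r0 r1 r2 j); last by rewrite mulr0.
    exfalso; move/eqP: hk; rewrite /kk hj.
    have := blk_range hs h0 h1 h2 (ltn_ord i); have := blk_range hs h0 h1 h2 (ltn_ord j).
    rewrite hj => hJ hI hk; move/eqP: ji; apply; apply/val_inj => /=; lia.
  by rewrite hQ ?coef0 // blk_le2.
apply/rowP => l; rewrite !mxE.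
pose F (r : nat) := (if (r < rho)%N then U`_r else U'`_(r - rho)) *
   (let i := if (r < rho)%N then r else (r - rho)%N in
    match ups r0 r1 l with 0%N => - x l ^+ i | 1%N => if (r < rho)%N then x l ^+ i else 0
    | _ => if (r < rho)%N then 0 else x l ^+ i end).
rewrite (eq_bigr (fun r : 'I_(2 * rho) => F r)); last by move=> r _; rewrite !mxE.
rewrite sum2.
have e1 : forall r : 'I_rho, F r = U`_r * (match ups r0 r1 l with 0%N => - x l ^+ r
   | 1%N => x l ^+ r | _ => 0 end).
  by move=> r; rewrite /F ltn_ord.
have e2 : forall r : 'I_rho, F (rho + r)%N = U'`_r * (match ups r0 r1 l with 0%N => - x l ^+ r
   | 1%N => 0 | _ => x l ^+ r end).
  by move=> r; rewrite /F ltnNge leq_addr /= addKn.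
rewrite (eq_bigr _ (fun r _ => e1 r)) (eq_bigr _ (fun r _ => e2 r)).
have hr := sigma_root r0 r1 x l.
case hu: (ups r0 r1 l) hr => [|[|k]] hr.
- under eq_bigr => r _ do rewrite mulrN.
  under [X in _ + X]eq_bigr => r _ do rewrite mulrN.
  rewrite !sumrN !hor // -opprD -hornerD.
  have -> : U + U' = - (Q 0%N * sig 0%N).
    by apply/eqP; rewrite -addr_eq0 addrC addrA hT.
  by rewrite hornerN opprK hornerM /sig hr mulr0.
- rewrite [X in _ + X](eq_bigr (fun=> 0)); last by move=> r _; rewrite mulr0.
  rewrite big1_eq addr0 hor //.
  by rewrite /U hornerM /sig hr mulr0.
- rewrite [X in X + _](eq_bigr (fun=> 0)); last by move=> r _; rewrite mulr0.
  rewrite big1_eq add0r hor //.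
  have hk : k = 0%N by move: (ups_le2 r0 r1 l); rewrite hu; case: k {hu hr}.
  by move: hr; rewrite hk => hr; rewrite /U' hornerM /sig hr mulr0.
Qed.

Lemma dirA (Phi : fieldType) rho r0 r1 r2 (x : 'I_(2 * rho) -> Phi) :
  (r0 + r1 + r2 = 2 * rho)%N -> (r0 < rho)%N -> (r1 < rho)%N -> (r2 < rho)%N ->
  (forall l l' : 'I_(2 * rho), ups r0 r1 l = ups r0 r1 l' -> l != l' -> x l != x l') ->
  \det (Smat r0 r1 r2 x) != 0 -> \det (Mmat r0 r1 x) != 0.
Proof.
move=> hs h0 h1 h2 hd hS; apply/negP => hM.
have : \det (Mmat r0 r1 x)^T == 0 by rewrite det_tr.
case/det0P => u un0 uM.
have Mv : Mmat r0 r1 x *m u^T = 0 by rewrite -[Mmat _ _ _]trmxK -trmx_mul uM trmx0.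
pose A (m e : nat) := \sum_(l : 'I_(2 * rho) | ups r0 r1 l == m) x l ^+ e * u 0 l.
pose B (m : nat) (p : {poly Phi}) := \sum_(l : 'I_(2 * rho) | ups r0 r1 l == m) p.[x l] * u 0 l.
have hMA : forall e, (e < rho)%N -> A 1%N e = A 0%N e /\ A 2%N e = A 0%N e.
  move=> e he; split.
  - have he2 : (e < 2 * rho)%N by lia.
    have := congr1 (fun M : 'M[Phi]_(2 * rho, 1) => M (Ordinal he2) 0) Mv.
    rewrite !mxE (@sum3 _ _ (fun l : 'I_(2 * rho) => ups r0 r1 l)); last exact: ups_le2.
    rewrite (eq_bigr (fun l => - (x l ^+ e * u 0 l))); last first.
      by move=> l /eqP hl; rewrite !mxE hl /= he mulNr.
    rewrite [X in _ + X + _](eq_bigr (fun l => x l ^+ e * u 0 l)); last first.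
      by move=> l /eqP hl; rewrite !mxE hl /= he.
    rewrite [X in _ + X](eq_bigr (fun l => 0)); last first.
      by move=> l /eqP hl; rewrite !mxE hl /= he mul0r.
    rewrite big1_eq addr0 sumrN => /eqP; rewrite addrC subr_eq0 => /eqP.
    by [].
  - have he2 : (rho + e < 2 * rho)%N by lia.
    have := congr1 (fun M : 'M[Phi]_(2 * rho, 1) => M (Ordinal he2) 0) Mv.
    rewrite !mxE (@sum3 _ _ (fun l : 'I_(2 * rho) => ups r0 r1 l)); last exact: ups_le2.
    have hf : (rho + e < rho)%N = false by rewrite ltnNge leq_addr.
    rewrite (eq_bigr (fun l => - (x l ^+ e * u 0 l))); last first.
      by move=> l /eqP hl; rewrite !mxE hl /= hf addKn mulNr.
    rewrite [X in _ + X + _](eq_bigr (fun l => 0)); last first.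
      by move=> l /eqP hl; rewrite !mxE hl /= hf mul0r.
    rewrite [X in _ + X](eq_bigr (fun l => x l ^+ e * u 0 l)); last first.
      by move=> l /eqP hl; rewrite !mxE hl /= hf addKn.
    rewrite big1_eq addr0 sumrN => /eqP; rewrite addrC subr_eq0 => /eqP.
    by [].
have hB : forall m (p : {poly Phi}), (size p <= rho)%N -> B m p = \sum_(e < rho) p`_e * A m e.
  move=> m p hp; rewrite /B /A.
  under eq_bigr => l _ do rewrite (horner_coef_wide _ hp) mulr_suml.
  rewrite exchange_big; apply: eq_bigr => e _; rewrite mulr_sumr.
  by apply: eq_bigr => l _; rewrite mulrA.
have hBeq : forall m (p : {poly Phi}), (m <= 2)%N -> (size p <= rho)%N -> B m p = B 0%N p.
  move=> m p hm hp; rewrite !hB //; apply: eq_bigr => e _.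
  have [e1 e2] := hMA e (ltn_ord e).
  by case: m hm => [|[|[|]]] //= _; rewrite ?e1 ?e2.
pose c := \col_(j < rho) A 0%N (rho - j.+1)%N.
have hSc : Smat r0 r1 r2 x *m c = 0.
  apply/colP => i; rewrite !mxE.
  set R := 'X^(kk rho r0 r1 r2 i) * sigma_poly r0 r1 x (blk rho r0 r1 i).
  have szR : (size R <= rho)%N.
    rewrite (leq_trans (size_polyMleq _ _)) // size_polyXn (size_sigma (r2:=r2)) ?blk_le2 //.
    have := blk_range hs h0 h1 h2 (ltn_ord i); rewrite /kk.
    have := rhom_lt (blk rho r0 r1 i) h0 h1 h2; lia.
  rewrite (eq_bigr (fun j : 'I_rho => R`_(rho - j.+1)%N * A 0%N (rho - j.+1)%N)); last first.
    by move=> j _; rewrite Smat_entry // mxE.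
  rewrite (reindex_inj rev_ord_inj) /=.
  rewrite (eq_bigr (fun j : 'I_rho => R`_j * A 0%N j)); last first.
    move=> j _; have -> // : (rho - (rho - j.+1).+1 = j)%N.
    have := ltn_ord j; lia.
  rewrite -hB // -(hBeq (blk rho r0 r1 i)) ?blk_le2 //.
  rewrite /B big1 // => l /eqP hl.
  by rewrite /R hornerM -hl sigma_root mulr0 mul0r.
have c0 : c = 0.
  have uS : Smat r0 r1 r2 x \in unitmx by rewrite unitmxE unitfE.
  by rewrite -(mulKmx uS c) hSc mulmx0.
have hA0 : forall e, (e < rho)%N -> A 0%N e = 0.
  move=> e he; have hj : (rho - e.+1 < rho)%N by lia.
  have := congr1 (fun M : 'M[Phi]_(rho, 1) => M (Ordinal hj) 0) c0.
  rewrite !mxE /=; have -> // : (rho - (rho - e.+1).+1 = e)%N by lia.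
have hB0 : forall m (p : {poly Phi}), (m <= 2)%N -> (size p <= rho)%N -> B m p = 0.
  move=> m p hm hp; rewrite hBeq // hB //; apply: big1 => e _.
  by rewrite hA0 ?mulr0.
apply: (negP un0); apply/eqP/rowP => l0; rewrite mxE.
pose L := \prod_(l : 'I_(2 * rho) | (ups r0 r1 l == ups r0 r1 l0) && (l != l0)) ('X - (x l)%:P).
have szL : (size L <= rho)%N.
  rewrite /L -big_filter size_prod_XsubC size_filter.
  have := card_ups hs (ups_le2 r0 r1 l0).
  rewrite (cardD1 l0) inE eqxx /= => hc.
  have := rhom_lt (ups r0 r1 l0) h0 h1 h2.
  rewrite -hc cardE /enum_mem size_filter /= => h; apply: leq_ltn_trans h.
  rewrite add1n; apply: ltnW; rewrite ltnS; apply: eq_leq.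
  by apply: eq_count => l; rewrite !inE andbC.
have := hB0 (ups r0 r1 l0) L (ups_le2 r0 r1 l0) szL.
rewrite /B (bigD1 l0) //= big1 ?addr0; last first.
  move=> l /andP[hl ll0]; rewrite /L horner_prod (bigD1 l) /=; last by rewrite hl ll0.
  by rewrite !hornerE subrr !mul0r.
move/eqP; rewrite mulf_eq0 => /orP[|/eqP //].
rewrite /L horner_prod; move/prodf_eq0 => [l /andP[hl ll0]].
rewrite !hornerE subr_eq0 => /eqP hx.
by move: (hd l0 l (esym (eqP hl))); rewrite eq_sym ll0 hx eqxx => /(_ isT).
Qed.
Unset Implicit Arguments.


Theorem mainTheorem18 (Phi : fieldType) (rho r0 r1 r2 : nat)
  (hrho : (3 <= rho)%N) (h0 : (2 <= r0)%N) (h01 : (r0 <= r1)%N)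
  (h12 : (r1 <= r2)%N) (h2 : (r2 < rho)%N) (hsum : (r0 + r1 + r2 = 2 * rho)%N)
  (alpha : 'I_(2 * rho) -> Phi) :
  \det (Mmat r0 r1 alpha) != 0 <->
  (\det (Smat r0 r1 r2 alpha) != 0 /\
   forall m : nat, (m <= 2)%N ->
     forall l l' : 'I_(2 * rho),
       ups r0 r1 l = m -> ups r0 r1 l' = m -> l != l' -> alpha l != alpha l').
Proof.
have g0 : (r0 < rho)%N by lia.
have g1 : (r1 < rho)%N by lia.
split.
- move=> hM; split.
    by move: hM; apply: contra; apply: (dirB hsum).
  move=> m hm l l' hl hl' ll'; apply: contraNneq hM => hx.
  rewrite -det_tr (determinant_alternate ll') // => j.
  by rewrite !mxE hl hl' hx.
- move=> [hS hd]; apply: (dirA hsum) => //.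
  move=> l l' hl ll'; apply: (hd (ups r0 r1 l)) => //; exact: ups_le2.
Qed.
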